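(* Work in $\mathbf{Sets}$ with a set $S$ and the state monad $T$. Let $(X,h)$ be a $T$-algebra, let $Y=\{h(s'\mapsto (s,x)) \mid s\in S, x\in X\}\subseteq X$, and let $e_X:S\times X\to Y$ be the surjection $(s,x)\mapsto h(s'\mapsto (s,x))$. Let $e_X^*:X\to Y^S$ be its transpose, $e_X^*(x)=\big(s\mapsto h(s'\mapsto (s,x))\big)$. Then $e_X^*$ is a bijection, with inverse $y\mapsto h(s\mapsto (s,y[s]))$.
   Context: $T$ is the monad on $\mathbf{Sets}$ given by $TX=(S\times X)^S$, with unit $\eta_X(x)=(s\mapsto(s,x))$ and multiplication $\mu_X$ sending $s\mapsto (c[s], s'\mapsto (c'[s,s'],x[s,s']))$ to $s\mapsto (c'[s,c[s]],x[s,c[s]])$. A $T$-algebra is a pair $(X,h)$ with $h:TX\to X$ satisfying $h\circ Th=h\circ\mu_X$ and $h\circ\eta_X=\mathrm{id}_X$. Elements of $TX$ are written as maps $s\mapsto(\cdot,\cdot)$ from $S$ to $S\times X$. *)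

(* Defs.v *)
From Stdlib Require Import FunctionalExtensionality.

Definition T (S X : Type) : Type := S -> S * X.

Definition eta {S X : Type} (x : X) : T S X := fun s => (s, x).

Definition Tmap {S X Z : Type} (f : X -> Z) (t : T S X) : T S Z :=
  fun s => (fst (t s), f (snd (t s))).

Definition mu {S X : Type} (t : T S (T S X)) : T S X :=
  fun s => snd (t s) (fst (t s)).

Definition is_T_algebra {S X : Type} (h : T S X -> X) : Prop :=
  (forall t : T S (T S X), h (Tmap h t) = h (mu t)) /\
  (forall x : X, h (eta x) = x).

Definition Yset {S X : Type} (h : T S X -> X) : Type :=
  { y : X | exists (s : S) (x : X), y = h (fun _ : S => (s, x)) }.

Definition e_X {S X : Type} (h : T S X -> X) (p : S * X) : Yset h :=
  exist _ (h (fun _ : S => (fst p, snd p)))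
        (ex_intro _ (fst p) (ex_intro _ (snd p) eq_refl)).

Definition e_X_star {S X : Type} (h : T S X -> X) (x : X) : S -> Yset h :=
  fun s => e_X h (s, x).

Definition e_X_star_inv {S X : Type} (h : T S X -> X) (y : S -> Yset h) : X :=
  h (fun s => (s, proj1_sig (y s))).

Definition bijective {A B : Type} (f : A -> B) : Prop :=
  exists g : B -> A, (forall a, g (f a) = a) /\ (forall b, f (g b) = b).

(* Main.v *)
Require Import Defs.
From Stdlib Require Import FunctionalExtensionality ProofIrrelevance.

Lemma inv1 (S X : Type) (h : T S X -> X) (Hh : is_T_algebra h) :
  forall x : X, e_X_star_inv h (e_X_star h x) = x.
Proof.
  destruct Hh as [H1 H2]. intro x.
  unfold e_X_star_inv, e_X_star, e_X; simpl.
  pose (t := fun s : S => (s, fun _ : S => (s, x))).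
  transitivity (h (Tmap h t)). reflexivity.
  rewrite H1. apply H2.
Qed.

Lemma inv2 (S X : Type) (h : T S X -> X) (Hh : is_T_algebra h) :
  forall y : S -> Yset h, e_X_star h (e_X_star_inv h y) = y.
Proof.
  pose proof Hh as [H1 H2]. intro y.
  apply functional_extensionality; intro s.
  destruct (y s) as [v Hv] eqn:Ey.
  unfold e_X_star, e_X; simpl.
  assert (E : h (fun _ : S => (s, e_X_star_inv h y)) = v).
  { unfold e_X_star_inv.
    pose (t := fun _ : S => (s, fun s'' : S => (s'', proj1_sig (y s'')))).
    transitivity (h (Tmap h t)). reflexivity.
    rewrite H1. unfold mu, t; simpl. rewrite Ey; simpl.
    destruct Hv as [a [b ->]].
    pose (t2 := fun _ : S => (s, fun _ : S => (a, b))).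
    transitivity (h (Tmap h t2)). reflexivity.
    rewrite H1. reflexivity. }
  revert Hv Ey. rewrite <- E. intros Hv Ey.
  f_equal. apply proof_irrelevance.
Qed.

Theorem mainTheorem2 (S X : Type) (h : T S X -> X) (Hh : is_T_algebra h) :
  bijective (e_X_star h) /\
  (forall x : X, e_X_star_inv h (e_X_star h x) = x) /\
  (forall y : S -> Yset h, e_X_star h (e_X_star_inv h y) = y).
Proof.
  split; [| split]; [| apply inv1; auto | apply inv2; auto].
  exists (e_X_star_inv h); split; [apply inv1 | apply inv2]; auto.
Qed.
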